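(* Let $x,y\in\mathbb{B}^2\setminus\{0\}$ be such that $0,x,y$ are noncollinear and $|x|\ne|y|$. Let $S^1(a,r_a)$ be the circle through $x,y,x^*,y^*$, where $a=i\frac{y(1+|x|^2)-x(1+|y|^2)}{2(x_2y_1-x_1y_2)}$, $r_a=\frac{|x-y|\,\big|x|y|^2-y\big|}{2|y||x_1y_2-x_2y_1|}$ (with $x=x_1+ix_2$, $y=y_1+iy_2$); it is orthogonal to $S^1$. Let $\{x_*,y_*\}=S^1\cap S^1(a,r_a)$, labelled so that $x_*,x,y,y_*$ occur in this order on the arc of $S^1(a,r_a)$ inside $\overline{\mathbb{B}^2}$. Let $w=L(x,y)\cap L(x^*,y^* )$, $u=L(x,y^* )\cap L(y,x^* )$, $v=L(x,x_* )\cap L(y,y_* )$, $s=L(x,y_* )\cap L(y,x_* )$, $t=L(x_*,y^* )\cap L(y_*,x^* )$, $k=L(x_*,x^* )\cap L(y_*,y^* )$. Let $S^1(w,r_w)$ be the circle centred at $w$ orthogonal to $S^1(a,r_a)$, and let $z$ be the point of $S^1(w,r_w)\cap S^1(a,r_a)$ in $\mathbb{B}^2$. Then: (1) the circle $S^1(w,r_w)$ is orthogonal to $S^1$, $z$ is the hyperbolic midpoint of the hyperbolic segment $J[x,y]$, and $$w=\frac{y(1-|x|^2)-x(1-|y|^2)}{|y|^2-|x|^2},\qquad r_w=\frac{|x-y|\sqrt{(1-|x|^2)(1-|y|^2)}}{\big||y|^2-|x|^2\big|};$$ (2) the points $v,s,t,k$ lie on the line $L(0,z)$, and $u$ is the intersection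 point of the lines $L(0,z)$ and $L(x_*,y_* )$, where $$u=\frac{y(1-|x|^2)+x(1-|y|^2)}{1-|x|^2|y|^2}.$$
   Context: $\mathbb{B}^2$ is the unit disk, $S^1$ the unit circle, $S^1(c,r)$ the circle with centre $c$ and radius $r$, $L(p,q)$ the line through $p,q$. For $x\ne0$, $x^*=x/|x|^2$ is the inversion of $x$ in $S^1$. Points are identified with complex numbers. The hyperbolic distance on $\mathbb{B}^2$ satisfies $\sinh\frac{\rho(x,y)}{2}=\frac{|x-y|}{\sqrt{1-|x|^2}\sqrt{1-|y|^2}}$; $J[x,y]$ is the arc of $S^1(a,r_a)$ between $x$ and $y$, and its hyperbolic midpoint is the $z\in J[x,y]$ with $\rho(x,z)=\rho(z,y)$. *)

(* Defs.v *)
From Stdlib Require Import Reals.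
From Coquelicot Require Export Coquelicot.
Open Scope R_scope.

Definition re (p : C) : R := fst p.
Definition im (p : C) : R := snd p.

Definition inv_pt (p : C) : C := (p / RtoC (Cmod p ^ 2))%C.

Definition cross (p q : C) : R := re p * im q - im p * re q.

Definition on_line (p q z : C) : Prop := cross (q - p)%C (z - p)%C = 0.

Definition on_circle (c : C) (r : R) (z : C) : Prop := Cmod (z - c)%C = r.

Definition orthogonal (c1 : C) (r1 : R) (c2 : C) (r2 : R) : Prop :=
  Cmod (c1 - c2)%C ^ 2 = r1 ^ 2 + r2 ^ 2.

Definition arsinh (t : R) : R := ln (t + sqrt (t ^ 2 + 1)).

(* hyperbolic distance on the unit disk:
   sinh (rho(x,y)/2) = |x-y| / (sqrt(1-|x|^2) sqrt(1-|y|^2)) *)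
Definition hdist (x y : C) : R :=
  2 * arsinh (Cmod (x - y)%C / (sqrt (1 - Cmod x ^ 2) * sqrt (1 - Cmod y ^ 2))).

(* the centre a and radius r_a of the circle through x, y, x*, y* *)
Definition center_a (x y : C) : C :=
  (Ci * (y * RtoC (1 + Cmod x ^ 2) - x * RtoC (1 + Cmod y ^ 2))
     / RtoC (2 * (im x * re y - re x * im y)))%C.

Definition radius_a (x y : C) : R :=
  Cmod (x - y)%C * Cmod (x * RtoC (Cmod y ^ 2) - y)%C
    / (2 * Cmod y * Rabs (re x * im y - im x * re y)).

(* J[p,q]: the closed arc of the circle S^1(c,r) (orthogonal to S^1) between
   p and q, inside the unit disk.  On this minor arc, z lies between p and q
   iff its chordal distances to p and q do not exceed |p - q|. *)
Definition on_J (c : C) (r : R) (p q z : C) : Prop :=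
  on_circle c r z /\ Cmod z < 1 /\
  Cmod (z - p)%C <= Cmod (q - p)%C /\ Cmod (z - q)%C <= Cmod (q - p)%C.

Definition hyp_midpoint (c : C) (r : R) (p q z : C) : Prop :=
  on_J c r p q z /\ hdist p z = hdist z q.

(* p1, p2, p3, p4 occur in this order on a minor circular arc starting at p1:
   the chordal distance from p1 increases strictly along the arc. *)
Definition arc_order4 (p1 p2 p3 p4 : C) : Prop :=
  Cmod (p2 - p1)%C < Cmod (p3 - p1)%C /\ Cmod (p3 - p1)%C < Cmod (p4 - p1)%C.

(* Main.v *)
Require Import Defs.
From Stdlib Require Import Reals Lra Psatz.
From Coquelicot Require Import Coquelicot.
Open Scope R_scope.

Lemma re_sub (p q : C) : re (p - q)%C = re p - re q.
Proof. unfold re; simpl; ring. Qed.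
Lemma im_sub (p q : C) : im (p - q)%C = im p - im q.
Proof. unfold im; simpl; ring. Qed.
Lemma re_add (p q : C) : re (p + q)%C = re p + re q.
Proof. unfold re; simpl; ring. Qed.
Lemma im_add (p q : C) : im (p + q)%C = im p + im q.
Proof. unfold im; simpl; ring. Qed.
Lemma re_mulR (p : C) (r : R) : re (p * RtoC r)%C = re p * r.
Proof. unfold re; simpl; ring. Qed.
Lemma im_mulR (p : C) (r : R) : im (p * RtoC r)%C = im p * r.
Proof. unfold im; simpl; ring. Qed.
Lemma re_divR (p : C) (r : R) : r <> 0 -> re (p / RtoC r)%C = re p / r.
Proof. intros; unfold re, Cdiv; simpl; field; auto. Qed.
Lemma im_divR (p : C) (r : R) : r <> 0 -> im (p / RtoC r)%C = im p / r.
Proof. intros; unfold im, Cdiv; simpl; field; auto. Qed.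
Lemma re_Ci (p : C) : re (Ci * p)%C = - im p.
Proof. unfold re, im; simpl; ring. Qed.
Lemma im_Ci (p : C) : im (Ci * p)%C = re p.
Proof. unfold re, im; simpl; ring. Qed.
Lemma re0 : re 0%C = 0. Proof. reflexivity. Qed.
Lemma im0 : im 0%C = 0. Proof. reflexivity. Qed.
Lemma Cmod_sq (p : C) : Cmod p ^ 2 = re p ^ 2 + im p ^ 2.
Proof. unfold Cmod, re, im. rewrite pow2_sqrt; [ring|nra]. Qed.
Lemma Cmod_ge0 (p : C) : 0 <= Cmod p.
Proof. apply Cmod_ge_0. Qed.
Lemma C_ext (p q : C) : re p = re q -> im p = im q -> p = q.
Proof. destruct p, q; unfold re, im; simpl; intros -> ->; reflexivity. Qed.
Lemma sq_eq (a b : R) : 0 <= a -> 0 <= b -> a ^ 2 = b ^ 2 -> a = b.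
Proof. intros; nra. Qed.
Lemma sq_le (a b : R) : 0 <= a -> 0 <= b -> a ^ 2 <= b ^ 2 -> a <= b.
Proof. intros; nra. Qed.

Definition dot (p q : C) := re p * re q + im p * im q.
Definition Cf (a p : C) := dot p p - 2 * dot p a + 1.
Definition Bf (a p q : C) := dot p q - dot p a - dot q a + 1.

Lemma online_iff (p q z : C) :
  on_line p q z <-> (re q - re p) * (im z - im p) - (im q - im p) * (re z - re p) = 0.
Proof. unfold on_line, cross. rewrite !re_sub, !im_sub. tauto. Qed.

Lemma sum_sq0 (a b : R) : a ^ 2 + b ^ 2 = 0 -> a = 0 /\ b = 0.
Proof.
  intros H. assert (a^2 = 0 /\ b^2 = 0) as [Ha Hb]
    by (pose proof (pow2_ge_0 a); pose proof (pow2_ge_0 b); lra).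
  split.
  - destruct (Req_dec a 0); auto. exfalso; apply (pow_nonzero a 2); auto.
  - destruct (Req_dec b 0); auto. exfalso; apply (pow_nonzero b 2); auto.
Qed.

Lemma neq_of_coords (p q : C) : (re p - re q) ^ 2 + (im p - im q) ^ 2 <> 0 -> p <> q.
Proof. intros H E; subst; apply H; ring. Qed.

Lemma coords_of_neq (p q : C) : p <> q -> (re p - re q) ^ 2 + (im p - im q) ^ 2 <> 0.
Proof. intros H E; apply H. apply sum_sq0 in E. apply C_ext; lra. Qed.

Lemma param (p q z : C) : p <> q -> on_line p q z ->
  exists t, re z = re p + t * (re q - re p) /\ im z = im p + t * (im q - im p).
Proof.
  intros Hpq Hl0. pose proof (proj1 (online_iff p q z) Hl0) as Hl. clear Hl0. apply coords_of_neq in Hpq.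
  set (d1 := re q - re p) in *. set (d2 := im q - im p) in *.
  assert (Hd : d1 ^ 2 + d2 ^ 2 <> 0) by (intro E; apply Hpq; unfold d1, d2 in E; apply sum_sq0 in E; replace (re p - re q) with 0 by lra; replace (im p - im q) with 0 by lra; ring).
  set (N := (re z - re p) * d1 + (im z - im p) * d2).
  set (M := d1 ^ 2 + d2 ^ 2) in *.
  assert (K1 : (re z - re p) * M = N * d1).
  { assert (T : (re z - re p) * M - N * d1 = - d2 * (d1 * (im z - im p) - d2 * (re z - re p)))
      by (unfold M, N; ring).
    rewrite Hl in T. lra. }
  assert (K2 : (im z - im p) * M = N * d2).
  { assert (T : (im z - im p) * M - N * d2 = d1 * (d1 * (im z - im p) - d2 * (re z - re p)))
      by (unfold M, N; ring).
    rewrite Hl in T. lra. }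
  exists (N / M). split.
  - replace (N / M * d1) with (N * d1 / M) by (field; exact Hd).
    rewrite <- K1; field; exact Hd.
  - replace (N / M * d2) with (N * d2 / M) by (field; exact Hd).
    rewrite <- K2; field; exact Hd.
Qed.

Lemma perp_cross (p q n : C) : dot p n = 0 -> dot q n = 0 -> n <> 0%C ->
  re p * im q - im p * re q = 0.
Proof.
  unfold dot; intros H1 H2 Hn.
  assert (Hn' : re n ^ 2 + im n ^ 2 <> 0).
  { intro E; apply Hn; apply sum_sq0 in E; apply C_ext; rewrite ?re0, ?im0; lra. }
  assert (E1 : (re p * im q - im p * re q) * re n = 0).
  { replace ((re p * im q - im p * re q) * re n) with
      (im q * (re p * re n + im p * im n) - im p * (re q * re n + im q * im n)) by ring.
    rewrite H1, H2; ring. }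
  assert (E2 : (re p * im q - im p * re q) * im n = 0).
  { replace ((re p * im q - im p * re q) * im n) with
      (- re q * (re p * re n + im p * im n) + re p * (re q * re n + im q * im n)) by ring.
    rewrite H1, H2; ring. }
  destruct (Req_dec (re n) 0) as [Hr|Hr].
  - destruct (Req_dec (im n) 0) as [Hi|Hi].
    + exfalso; apply Hn'; rewrite Hr, Hi; ring.
    + apply Rmult_integral in E2; destruct E2; [assumption|contradiction].
  - apply Rmult_integral in E1; destruct E1; [assumption|contradiction].
Qed.

Lemma uniq2 (A B C0 D e1 e2 : R) : A * e2 - B * e1 = 0 -> C0 * e2 - D * e1 = 0 ->
  A * D - B * C0 <> 0 -> e1 = 0 /\ e2 = 0.
Proof.
  intros H1 H2 Hd.
  assert (E1 : e1 * (A * D - B * C0) = 0).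
  { replace (e1 * (A * D - B * C0)) with (C0 * (A * e2 - B * e1) - A * (C0 * e2 - D * e1)) by ring.
    rewrite H1, H2; ring. }
  assert (E2 : e2 * (A * D - B * C0) = 0).
  { replace (e2 * (A * D - B * C0)) with (D * (A * e2 - B * e1) - B * (C0 * e2 - D * e1)) by ring.
    rewrite H1, H2; ring. }
  apply Rmult_integral in E1; apply Rmult_integral in E2.
  destruct E1; [|contradiction]; destruct E2; [|contradiction]; auto.
Qed.

Lemma noncol (a p1 p2 p3 : C) : Cf a p1 = 0 -> Cf a p2 = 0 -> Cf a p3 = 0 ->
  p1 <> p2 -> p1 <> p3 -> p2 <> p3 ->
  (re p2 - re p1) * (im p3 - im p1) - (im p2 - im p1) * (re p3 - re p1) <> 0.
Proof.
  intros C1 C2 C3 H12 H13 H23 E.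
  assert (Hl : on_line p1 p2 p3) by (apply online_iff; exact E).
  destruct (param p1 p2 p3 H12 Hl) as [tt [Er Ei]].
  assert (Hd := coords_of_neq _ _ H12).
  assert (K : tt * (1 - tt) * ((re p1 - re p2) ^ 2 + (im p1 - im p2) ^ 2) = 0).
  { replace (tt * (1 - tt) * ((re p1 - re p2) ^ 2 + (im p1 - im p2) ^ 2)) with
       ((1 - tt) * Cf a p1 + tt * Cf a p2 - Cf a p3).
    - rewrite C1, C2, C3; ring.
    - unfold Cf, dot. rewrite Er, Ei. ring. }
  apply Rmult_integral in K; destruct K as [K|K]; [|contradiction].
  apply Rmult_integral in K; destruct K as [K|K].
  - apply H13; apply C_ext; rewrite ?Er, ?Ei, K; ring.
  - apply H23; apply C_ext; rewrite ?Er, ?Ei; replace tt with 1 by lra; ring.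
Qed.

Lemma polar (a w p1 p2 p3 p4 P : C) :
  Cf a p1 = 0 -> Cf a p2 = 0 -> Cf a p3 = 0 -> Cf a p4 = 0 ->
  p1 <> p2 -> p1 <> p3 -> p2 <> p3 -> p2 <> p4 -> p3 <> p4 ->
  on_line p1 p3 w -> on_line p2 p4 w -> on_line p1 p2 P -> on_line p3 p4 P ->
  Bf a w P = 0.
Proof.
  intros C1 C2 C3 C4 H12 H13 H23 H24 H34 Lw1 Lw2 LP1 LP2.
  destruct (param _ _ _ H13 Lw1) as [sg [Ws1 Ws2]].
  destruct (param _ _ _ H24 Lw2) as [ta [Wt1 Wt2]].
  destruct (param _ _ _ H12 LP1) as [la [P1 P2]].
  destruct (param _ _ _ H34 LP2) as [mu [Q1 Q2]].
  pose proof (noncol a p1 p2 p3 C1 C2 C3 H12 H13 H23) as Hcr.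
  set (cr := (re p2 - re p1) * (im p3 - im p1) - (im p2 - im p1) * (re p3 - re p1)) in *.
  assert (Fw1 : re p1 + sg * (re p3 - re p1) - (re p2 + ta * (re p4 - re p2)) = 0) by lra.
  assert (Fw2 : im p1 + sg * (im p3 - im p1) - (im p2 + ta * (im p4 - im p2)) = 0) by lra.
  assert (FP1 : re p1 + la * (re p2 - re p1) - (re p3 + mu * (re p4 - re p3)) = 0) by lra.
  assert (FP2 : im p1 + la * (im p2 - im p1) - (im p3 + mu * (im p4 - im p3)) = 0) by lra.
  set (c2 := - mu * (1 - ta) - ta * la).
  set (c3 := mu * sg + ta * (1 - mu)).
  assert (E2 : c2 * cr = 0).
  { assert (T : c2 * cr = (im p3 - im p1) * (mu * (re p1 + sg * (re p3 - re p1) - (re p2 + ta * (re p4 - re p2)))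
          - ta * (re p1 + la * (re p2 - re p1) - (re p3 + mu * (re p4 - re p3))))
        - (re p3 - re p1) * (mu * (im p1 + sg * (im p3 - im p1) - (im p2 + ta * (im p4 - im p2)))
          - ta * (im p1 + la * (im p2 - im p1) - (im p3 + mu * (im p4 - im p3)))))
      by (unfold c2, cr; ring).
    rewrite Fw1, Fw2, FP1, FP2 in T. lra. }
  assert (E3 : c3 * cr = 0).
  { assert (T : c3 * cr = - (im p2 - im p1) * (mu * (re p1 + sg * (re p3 - re p1) - (re p2 + ta * (re p4 - re p2)))
          - ta * (re p1 + la * (re p2 - re p1) - (re p3 + mu * (re p4 - re p3))))
        + (re p2 - re p1) * (mu * (im p1 + sg * (im p3 - im p1) - (im p2 + ta * (im p4 - im p2)))
          - ta * (im p1 + la * (im p2 - im p1) - (im p3 + mu * (im p4 - im p3)))))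
      by (unfold c3, cr; ring).
    rewrite Fw1, Fw2, FP1, FP2 in T. lra. }
  apply Rmult_integral in E2; destruct E2 as [E2|E2]; [|contradiction].
  apply Rmult_integral in E3; destruct E3 as [E3|E3]; [|contradiction].
  unfold c2 in E2; unfold c3 in E3.
  assert (h1 : ta * (1 - la) = mu * (1 - sg)) by lra.
  assert (h2 : ta * la = - mu * (1 - ta)) by lra.
  assert (fp1 : Bf a w p1 = (1 - sg) * Cf a p1 + sg * Bf a p3 p1)
    by (unfold Bf, Cf, dot; rewrite Ws1, Ws2; ring).
  assert (fp2 : Bf a w p2 = (1 - ta) * Cf a p2 + ta * Bf a p4 p2)
    by (unfold Bf, Cf, dot; rewrite Wt1, Wt2; ring).
  assert (cw1 : Cf a w = (1 - sg) ^ 2 * Cf a p1 + 2 * sg * (1 - sg) * Bf a p3 p1 + sg ^ 2 * Cf a p3)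
    by (unfold Bf, Cf, dot; rewrite Ws1, Ws2; ring).
  assert (cw2 : Cf a w = (1 - ta) ^ 2 * Cf a p2 + 2 * ta * (1 - ta) * Bf a p4 p2 + ta ^ 2 * Cf a p4)
    by (unfold Bf, Cf, dot; rewrite Wt1, Wt2; ring).
  assert (fP : Bf a w P = (1 - la) * Bf a w p1 + la * Bf a w p2)
    by (unfold Bf, dot; rewrite P1, P2; ring).
  rewrite C1, C2, C3, C4 in *.
  assert (h3 : sg * (1 - sg) * Bf a p3 p1 = ta * (1 - ta) * Bf a p4 p2) by lra.
  assert (Hta : ta <> 0).
  { intro T0. apply Hcr. rewrite T0 in Wt1, Wt2.
    assert (R1 : re p2 = re p1 + sg * (re p3 - re p1)) by lra.
    assert (R2 : im p2 = im p1 + sg * (im p3 - im p1)) by lra.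
    unfold cr; rewrite R1, R2; ring. }
  assert (Fin : ta * Bf a w P = 0).
  { rewrite fP, fp1, fp2.
    replace (ta * ((1 - la) * ((1 - sg) * 0 + sg * Bf a p3 p1) + la * ((1 - ta) * 0 + ta * Bf a p4 p2)))
      with (sg * Bf a p3 p1 * (ta * (1 - la)) + ta * Bf a p4 p2 * (ta * la)) by ring.
    rewrite h1, h2.
    replace (sg * Bf a p3 p1 * (mu * (1 - sg)) + ta * Bf a p4 p2 * (- mu * (1 - ta)))
      with (mu * (sg * (1 - sg) * Bf a p3 p1 - ta * (1 - ta) * Bf a p4 p2)) by ring.
    rewrite h3; ring. }
  apply Rmult_integral in Fin; destruct Fin; [contradiction|assumption].
Qed.


Lemma lam_bound (Uu la D G AB : R) : D > 0 -> AB > 0 -> 0 <= G -> Uu * D ^ 2 = G ->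
  G <= D ^ 2 - AB ^ 2 -> la ^ 2 * Uu - 2 * la + 1 = 0 -> la ^ 2 * Uu < 1 ->
  la * (D + AB) <= D.
Proof.
  intros HD HAB HG HU Hle Hq Hz.
  assert (Hla1 : la < 1) by lra.
  assert (HQ : G * la ^ 2 - 2 * D ^ 2 * la + D ^ 2 = 0).
  { rewrite <- HU. replace (Uu * D ^ 2 * la ^ 2 - 2 * D ^ 2 * la + D ^ 2)
      with (D ^ 2 * (la ^ 2 * Uu - 2 * la + 1)) by ring. rewrite Hq; ring. }
  set (m := D + AB).
  assert (Hm : m > D) by (unfold m; lra).
  destruct (Rle_dec (la * m) D) as [Hok|Hno]; [exact Hok|exfalso].
  apply Rnot_le_lt in Hno.
  set (l0 := D / m).
  assert (Hl0 : l0 * m = D) by (unfold l0; field; lra).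
  assert (Hl0p : 0 < l0) by (unfold l0; apply Rdiv_lt_0_compat; lra).
  assert (Hl01 : l0 < 1) by (unfold l0; apply (Rmult_lt_reg_r m); [lra|]; field_simplify; lra).
  assert (Hgt : la > l0) by (apply (Rmult_lt_reg_r m); [lra|]; lra).
  assert (HQ0 : G * l0 ^ 2 - 2 * D ^ 2 * l0 + D ^ 2 <= 0).
  { assert (T : (G * l0 ^ 2 - 2 * D ^ 2 * l0 + D ^ 2)
               = l0 ^ 2 * (G - 2 * D * m + m ^ 2)).
    { rewrite <- Hl0. ring. }
    assert (T2 : G - 2 * D * m + m ^ 2 <= 0) by (unfold m; nra).
    assert (T3 : l0 ^ 2 * (G - 2 * D * m + m ^ 2) <= 0) by nra.
    nra. }
  assert (Hdiff : (la - l0) * (G * (la + l0) - 2 * D ^ 2) >= 0) by nra.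
  assert (HGD : G < D ^ 2) by nra.
  assert (G * (la + l0) < 2 * D ^ 2) by nra.
  nra.
Qed.

Lemma online0 (z P n : C) : dot z n = 0 -> dot P n = 0 -> n <> 0%C -> on_line 0%C z P.
Proof.
  intros H1 H2 Hn. pose proof (perp_cross z P n H1 H2 Hn) as E.
  apply online_iff. rewrite re0, im0. lra.
Qed.

Lemma collin_a (a p q r : C) : dot p a = 1 -> dot q a = 1 -> dot r a = 1 -> a <> 0%C ->
  on_line p q r.
Proof.
  intros H1 H2 H3 Ha.
  assert (E1 : dot (q - p) a = 0) by (unfold dot in *; rewrite re_sub, im_sub; lra).
  assert (E2 : dot (r - p) a = 0) by (unfold dot in *; rewrite re_sub, im_sub; lra).
  pose proof (perp_cross _ _ _ E1 E2 Ha) as E.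
  apply online_iff. rewrite !re_sub, !im_sub in E. lra.
Qed.

Lemma online_swap (p q z : C) : on_line p q z -> on_line q p z.
Proof.
  intros H; apply online_iff; pose proof (proj1 (online_iff _ _ _) H) as H0. lra.
Qed.

Lemma neq_dot (p q : C) : dot p p <> dot q q -> p <> q.
Proof. intros H E; apply H; rewrite E; reflexivity. Qed.

Lemma Bf_polar (a w P : C) : dot w a = 1 -> Bf a w P = 0 -> dot P (w - a) = 0.
Proof. unfold Bf, dot; intros H1 H2; rewrite re_sub, im_sub. lra. Qed.

Lemma mod_lt1 (p : C) : Cmod p < 1 -> re p ^ 2 + im p ^ 2 < 1.
Proof. intros H. rewrite <- Cmod_sq. pose proof (Cmod_ge0 p). nra. Qed.

Lemma lk (la K D p m : R) : D > 0 -> 1 - p > 0 -> K * D = (1 - p) * m -> la * m <= D ->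
  la * K <= 1 - p.
Proof.
  intros HD Hp HK Hm.
  assert (la * K * D <= (1 - p) * D).
  { assert (E : la * K * D = (1 - p) * (la * m))
      by (replace (la * K * D) with (la * (K * D)) by ring; rewrite HK; ring).
    rewrite E. apply Rmult_le_compat_l; lra. }
  apply (Rmult_le_reg_r D); lra.
Qed.

Lemma p_lt1 (a b c d : R) : a ^ 2 + b ^ 2 < 1 -> c ^ 2 + d ^ 2 < 1 -> 1 - (a * c + b * d) > 0.
Proof.
  intros H1 H2. assert (T : (a - c) ^ 2 + (b - d) ^ 2 = a ^ 2 + b ^ 2 + (c ^ 2 + d ^ 2) - 2 * (a * c + b * d)) by ring.
  pose proof (pow2_ge_0 (a - c)); pose proof (pow2_ge_0 (b - d)). lra.
Qed.


Create HintDb cre.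
#[global] Hint Rewrite re_sub im_sub re_add im_add re_mulR im_mulR re_Ci im_Ci re0 im0 Cmod_sq : cre.

Theorem lemma4p6 (x y : C)
  (hx0 : x <> 0%C) (hy0 : y <> 0%C)
  (hx1 : Cmod x < 1) (hy1 : Cmod y < 1)
  (hnc : ~ on_line 0%C x y)
  (hxy : Cmod x <> Cmod y)
  (xs ys : C)
  (hxs1 : Cmod xs = 1) (hys1 : Cmod ys = 1)
  (hxsa : on_circle (center_a x y) (radius_a x y) xs)
  (hysa : on_circle (center_a x y) (radius_a x y) ys)
  (hord : arc_order4 xs x y ys)
  (w u v s t k : C)
  (hw1 : on_line x y w) (hw2 : on_line (inv_pt x) (inv_pt y) w)
  (hu1 : on_line x (inv_pt y) u) (hu2 : on_line y (inv_pt x) u)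
  (hv1 : on_line x xs v) (hv2 : on_line y ys v)
  (hs1 : on_line x ys s) (hs2 : on_line y xs s)
  (ht1 : on_line xs (inv_pt y) t) (ht2 : on_line ys (inv_pt x) t)
  (hk1 : on_line xs (inv_pt x) k) (hk2 : on_line ys (inv_pt y) k)
  (rw : R) (hrw : 0 < rw)
  (hworth : orthogonal w rw (center_a x y) (radius_a x y))
  (z : C)
  (hzw : on_circle w rw z) (hza : on_circle (center_a x y) (radius_a x y) z)
  (hz1 : Cmod z < 1) :
  (orthogonal w rw 0%C 1
   /\ hyp_midpoint (center_a x y) (radius_a x y) x y z
   /\ w = ((y * RtoC (1 - Cmod x ^ 2) - x * RtoC (1 - Cmod y ^ 2))
             / RtoC (Cmod y ^ 2 - Cmod x ^ 2))%C
   /\ rw = Cmod (x - y)%C * sqrt ((1 - Cmod x ^ 2) * (1 - Cmod y ^ 2))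
             / Rabs (Cmod y ^ 2 - Cmod x ^ 2))
  /\
  (on_line 0%C z v /\ on_line 0%C z s /\ on_line 0%C z t /\ on_line 0%C z k
   /\ on_line 0%C z u /\ on_line xs ys u
   /\ u = ((y * RtoC (1 - Cmod x ^ 2) + x * RtoC (1 - Cmod y ^ 2))
             / RtoC (1 - Cmod x ^ 2 * Cmod y ^ 2))%C).
Proof.
  assert (Hc : re x * im y - im x * re y <> 0).
  { intro E; apply hnc; apply online_iff; rewrite re0, im0; lra. }
  assert (HX : Cmod x ^ 2 = re x ^ 2 + im x ^ 2) by apply Cmod_sq.
  assert (HY : Cmod y ^ 2 = re y ^ 2 + im y ^ 2) by apply Cmod_sq.
  assert (HX1 : re x ^ 2 + im x ^ 2 < 1) by (rewrite <- HX; pose proof (Cmod_ge0 x); nra).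
  assert (HY1 : re y ^ 2 + im y ^ 2 < 1) by (rewrite <- HY; pose proof (Cmod_ge0 y); nra).
  assert (HX0 : re x ^ 2 + im x ^ 2 > 0).
  { pose proof (coords_of_neq _ _ hx0) as E; rewrite re0, im0 in E.
    assert (0 <= re x ^ 2 + im x ^ 2) by nra. replace (re x - 0) with (re x) in E by ring.
    replace (im x - 0) with (im x) in E by ring. lra. }
  assert (HY0 : re y ^ 2 + im y ^ 2 > 0).
  { pose proof (coords_of_neq _ _ hy0) as E; rewrite re0, im0 in E.
    assert (0 <= re y ^ 2 + im y ^ 2) by nra. replace (re y - 0) with (re y) in E by ring.
    replace (im y - 0) with (im y) in E by ring. lra. }
  assert (HXY : re y ^ 2 + im y ^ 2 - (re x ^ 2 + im x ^ 2) <> 0).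
  { intro E; apply hxy. apply sq_eq; try apply Cmod_ge0. lra. }
  assert (Hr : 2 * (im x * re y - re x * im y) <> 0) by lra.
  assert (Ha1 : re (center_a x y) = - ((im y * (1 + (re x ^ 2 + im x ^ 2)) - im x * (1 + (re y ^ 2 + im y ^ 2))))
                 / (2 * (im x * re y - re x * im y))).
  { unfold center_a. rewrite re_divR by exact Hr. autorewrite with cre. reflexivity. }
  assert (Ha2 : im (center_a x y) = ((re y * (1 + (re x ^ 2 + im x ^ 2)) - re x * (1 + (re y ^ 2 + im y ^ 2))))
                 / (2 * (im x * re y - re x * im y))).
  { unfold center_a. rewrite im_divR by exact Hr. autorewrite with cre. reflexivity. }
  set (a := center_a x y) in *.
  set (ra := radius_a x y) in *.
  assert (Hra0 : 0 <= ra).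
  { unfold ra, radius_a. apply Rmult_le_pos.
    - apply Rmult_le_pos; apply Cmod_ge0.
    - left; apply Rinv_0_lt_compat. apply Rmult_lt_0_compat.
      + assert (0 < Cmod y) by (pose proof (Cmod_ge0 y); nra). lra.
      + apply Rabs_pos_lt. lra. }
  assert (Hra2 : ra ^ 2 = re a ^ 2 + im a ^ 2 - 1).
  { assert (Hy' : Cmod y <> 0) by (intro E; rewrite E in HY; lra).
    assert (Hab : Rabs (re x * im y - im x * re y) <> 0) by (apply Rabs_no_R0; exact Hc).
    unfold ra, radius_a.
    replace ((Cmod (x - y) * Cmod (x * RtoC (Cmod y ^ 2) - y) /
        (2 * Cmod y * Rabs (re x * im y - im x * re y))) ^ 2)
      with (Cmod (x - y) ^ 2 * Cmod (x * RtoC (Cmod y ^ 2) - y) ^ 2 /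
        (4 * Cmod y ^ 2 * Rabs (re x * im y - im x * re y) ^ 2)) by (field; auto).
    rewrite <- !Rsqr_pow2, <- Rsqr_abs, !Rsqr_pow2.
    autorewrite with cre. rewrite Ha1, Ha2. field. split; lra. }
  assert (Hcirc : forall p, on_circle a ra p -> Cf a p = 0).
  { intros p Hp. unfold on_circle in Hp.
    assert (E : Cmod (p - a) ^ 2 = ra ^ 2) by (rewrite Hp; ring).
    autorewrite with cre in E. unfold Cf, dot. lra. }
  assert (Hxi1 : re (inv_pt x) = re x / (re x ^ 2 + im x ^ 2)).
  { unfold inv_pt; rewrite re_divR by lra. rewrite HX; reflexivity. }
  assert (Hxi2 : im (inv_pt x) = im x / (re x ^ 2 + im x ^ 2)).
  { unfold inv_pt; rewrite im_divR by lra. rewrite HX; reflexivity. }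
  assert (Hyi1 : re (inv_pt y) = re y / (re y ^ 2 + im y ^ 2)).
  { unfold inv_pt; rewrite re_divR by lra. rewrite HY; reflexivity. }
  assert (Hyi2 : im (inv_pt y) = im y / (re y ^ 2 + im y ^ 2)).
  { unfold inv_pt; rewrite im_divR by lra. rewrite HY; reflexivity. }
  assert (HCx : Cf a x = 0) by (unfold Cf, dot; rewrite Ha1, Ha2; field; lra).
  assert (HCy : Cf a y = 0) by (unfold Cf, dot; rewrite Ha1, Ha2; field; lra).
  assert (HCxi : Cf a (inv_pt x) = 0)
    by (unfold Cf, dot; rewrite Hxi1, Hxi2, Ha1, Ha2; field; lra).
  assert (HCyi : Cf a (inv_pt y) = 0)
    by (unfold Cf, dot; rewrite Hyi1, Hyi2, Ha1, Ha2; field; lra).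
  assert (HCxs : Cf a xs = 0) by (apply Hcirc; exact hxsa).
  assert (HCys : Cf a ys = 0) by (apply Hcirc; exact hysa).
  assert (HCz : Cf a z = 0) by (apply Hcirc; exact hza).
  assert (HXs : re xs ^ 2 + im xs ^ 2 = 1) by (rewrite <- Cmod_sq, hxs1; ring).
  assert (HYs : re ys ^ 2 + im ys ^ 2 = 1) by (rewrite <- Cmod_sq, hys1; ring).
  assert (Hxsa : dot xs a = 1) by (unfold Cf, dot in *; lra).
  assert (Hysa : dot ys a = 1) by (unfold Cf, dot in *; lra).
  set (wf := ((y * RtoC (1 - Cmod x ^ 2) - x * RtoC (1 - Cmod y ^ 2))
             / RtoC (Cmod y ^ 2 - Cmod x ^ 2))%C).
  assert (HwfD : Cmod y ^ 2 - Cmod x ^ 2 <> 0) by (rewrite HX, HY; exact HXY).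
  assert (Hwf1 : re wf = (re y * (1 - (re x ^ 2 + im x ^ 2)) - re x * (1 - (re y ^ 2 + im y ^ 2)))
                         / (re y ^ 2 + im y ^ 2 - (re x ^ 2 + im x ^ 2))).
  { unfold wf. rewrite re_divR by exact HwfD. autorewrite with cre. reflexivity. }
  assert (Hwf2 : im wf = (im y * (1 - (re x ^ 2 + im x ^ 2)) - im x * (1 - (re y ^ 2 + im y ^ 2)))
                         / (re y ^ 2 + im y ^ 2 - (re x ^ 2 + im x ^ 2))).
  { unfold wf. rewrite im_divR by exact HwfD. autorewrite with cre. reflexivity. }
  assert (Hweq : w = wf).
  { pose proof (proj1 (online_iff _ _ _) hw1) as L1.
    pose proof (proj1 (online_iff _ _ _) hw2) as L2.
    assert (L1' : (re y - re x) * (im wf - im x) - (im y - im x) * (re wf - re x) = 0)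
      by (rewrite Hwf1, Hwf2; field; lra).
    assert (L2' : (re (inv_pt y) - re (inv_pt x)) * (im wf - im (inv_pt x))
                  - (im (inv_pt y) - im (inv_pt x)) * (re wf - re (inv_pt x)) = 0)
      by (rewrite Hwf1, Hwf2, Hxi1, Hxi2, Hyi1, Hyi2; field; lra).
    assert (Hdet : (re y - re x) * (im (inv_pt y) - im (inv_pt x))
                   - (im y - im x) * (re (inv_pt y) - re (inv_pt x))
                   = (re x * im y - im x * re y) * ((re y ^ 2 + im y ^ 2) - (re x ^ 2 + im x ^ 2))
                     / ((re x ^ 2 + im x ^ 2) * (re y ^ 2 + im y ^ 2)))
      by (rewrite Hxi1, Hxi2, Hyi1, Hyi2; field; lra).
    destruct (uniq2 (re y - re x) (im y - im x) (re (inv_pt y) - re (inv_pt x))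
                (im (inv_pt y) - im (inv_pt x)) (re w - re wf) (im w - im wf)) as [E1 E2].
    - lra.
    - lra.
    - rewrite Hdet. intro E. apply Rmult_integral in E. destruct E as [E|E].
      + apply Rmult_integral in E; destruct E; [contradiction|contradiction].
      + apply Rinv_neq_0_compat in E; [exact E|]. apply Rmult_integral_contrapositive; split; lra.
    - apply C_ext; lra. }
  set (uf := ((y * RtoC (1 - Cmod x ^ 2) + x * RtoC (1 - Cmod y ^ 2))
             / RtoC (1 - Cmod x ^ 2 * Cmod y ^ 2))%C).
  assert (HXY1 : (re x ^ 2 + im x ^ 2) * (re y ^ 2 + im y ^ 2) < 1) by nra.
  assert (HufD : 1 - Cmod x ^ 2 * Cmod y ^ 2 <> 0) by (rewrite HX, HY; lra).
  assert (Huf1 : re uf = (re y * (1 - (re x ^ 2 + im x ^ 2)) + re x * (1 - (re y ^ 2 + im y ^ 2)))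
                         / (1 - (re x ^ 2 + im x ^ 2) * (re y ^ 2 + im y ^ 2))).
  { unfold uf. rewrite re_divR by exact HufD. autorewrite with cre. reflexivity. }
  assert (Huf2 : im uf = (im y * (1 - (re x ^ 2 + im x ^ 2)) + im x * (1 - (re y ^ 2 + im y ^ 2)))
                         / (1 - (re x ^ 2 + im x ^ 2) * (re y ^ 2 + im y ^ 2))).
  { unfold uf. rewrite im_divR by exact HufD. autorewrite with cre. reflexivity. }
  assert (Hueq : u = uf).
  { pose proof (proj1 (online_iff _ _ _) hu1) as L1.
    pose proof (proj1 (online_iff _ _ _) hu2) as L2.
    assert (L1' : (re (inv_pt y) - re x) * (im uf - im x) - (im (inv_pt y) - im x) * (re uf - re x) = 0)
      by (rewrite Huf1, Huf2, Hyi1, Hyi2; field; lra).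
    assert (L2' : (re (inv_pt x) - re y) * (im uf - im y) - (im (inv_pt x) - im y) * (re uf - re y) = 0)
      by (rewrite Huf1, Huf2, Hxi1, Hxi2; field; lra).
    assert (Hdet : (re (inv_pt y) - re x) * (im (inv_pt x) - im y)
                   - (im (inv_pt y) - im x) * (re (inv_pt x) - re y)
                   = (re x * im y - im x * re y) * ((re x ^ 2 + im x ^ 2) * (re y ^ 2 + im y ^ 2) - 1)
                     / ((re x ^ 2 + im x ^ 2) * (re y ^ 2 + im y ^ 2)))
      by (rewrite Hxi1, Hxi2, Hyi1, Hyi2; field; lra).
    destruct (uniq2 (re (inv_pt y) - re x) (im (inv_pt y) - im x) (re (inv_pt x) - re y)
                (im (inv_pt x) - im y) (re u - re uf) (im u - im uf)) as [E1 E2].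
    - lra.
    - lra.
    - rewrite Hdet. intro E. apply Rmult_integral in E. destruct E as [E|E].
      + apply Rmult_integral in E; destruct E; [contradiction|lra].
      + apply Rinv_neq_0_compat in E; [exact E|]. apply Rmult_integral_contrapositive; split; lra.
    - apply C_ext; lra. }
  assert (Hw1 : re w = re wf) by (rewrite Hweq; reflexivity).
  assert (Hw2 : im w = im wf) by (rewrite Hweq; reflexivity).
  assert (Hu1 : re u = re uf) by (rewrite Hueq; reflexivity).
  assert (Hu2 : im u = im uf) by (rewrite Hueq; reflexivity).
  rewrite Hwf1 in Hw1; rewrite Hwf2 in Hw2; rewrite Huf1 in Hu1; rewrite Huf2 in Hu2.
  assert (Hwa : dot w a = 1) by (unfold dot; rewrite Hw1, Hw2, Ha1, Ha2; field; lra).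
  assert (Hua : dot u a = 1) by (unfold dot; rewrite Hu1, Hu2, Ha1, Ha2; field; lra).
  assert (Huw : dot u w = 1) by (unfold dot; rewrite Hu1, Hu2, Hw1, Hw2; field; lra).
  assert (Hwa2 : Cmod (w - a) ^ 2 = rw ^ 2 + ra ^ 2)
    by (unfold orthogonal in hworth; exact hworth).
  assert (Hrw2 : rw ^ 2 = dot w w - 1).
  { pose proof Hwa2 as E. autorewrite with cre in E. unfold dot in *. lra. }
  assert (Horth : orthogonal w rw 0%C 1).
  { unfold orthogonal. autorewrite with cre. unfold dot in Hrw2. lra. }
  assert (Hzw2 : dot z z - 2 * dot z w + 1 = 0).
  { assert (E : Cmod (z - w) ^ 2 = rw ^ 2) by (rewrite hzw; ring).
    autorewrite with cre in E. unfold dot in *. lra. }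
  assert (Hzn : dot z (w - a) = 0).
  { unfold Cf, dot in *. autorewrite with cre. lra. }
  assert (Hn : (w - a)%C <> 0%C).
  { intro E. assert (E2 : Cmod (w - a) ^ 2 = 0) by (rewrite E; autorewrite with cre; ring).
    rewrite Hwa2 in E2. nra. }
  assert (Ha0 : a <> 0%C).
  { intro E. assert (E2 : re a ^ 2 + im a ^ 2 = 0) by (rewrite E, re0, im0; ring).
    nra. }
  set (xi := inv_pt x) in *. set (yi := inv_pt y) in *.
  assert (Nx : dot x x = re x ^ 2 + im x ^ 2) by (unfold dot; ring).
  assert (Ny : dot y y = re y ^ 2 + im y ^ 2) by (unfold dot; ring).
  assert (Nxs : dot xs xs = 1) by (unfold dot; lra).
  assert (Nys : dot ys ys = 1) by (unfold dot; lra).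
  assert (Nxi : dot xi xi = 1 / (re x ^ 2 + im x ^ 2))
    by (unfold dot; rewrite Hxi1, Hxi2; field; lra).
  assert (Nyi : dot yi yi = 1 / (re y ^ 2 + im y ^ 2))
    by (unfold dot; rewrite Hyi1, Hyi2; field; lra).
  assert (Nxi1 : 1 / (re x ^ 2 + im x ^ 2) > 1).
  { assert (T : 1 / (re x ^ 2 + im x ^ 2) - 1 = (1 - (re x ^ 2 + im x ^ 2)) / (re x ^ 2 + im x ^ 2))
      by (field; lra).
    assert ((1 - (re x ^ 2 + im x ^ 2)) / (re x ^ 2 + im x ^ 2) > 0)
      by (apply Rdiv_lt_0_compat; lra). lra. }
  assert (Nyi1 : 1 / (re y ^ 2 + im y ^ 2) > 1).
  { assert (T : 1 / (re y ^ 2 + im y ^ 2) - 1 = (1 - (re y ^ 2 + im y ^ 2)) / (re y ^ 2 + im y ^ 2))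
      by (field; lra).
    assert ((1 - (re y ^ 2 + im y ^ 2)) / (re y ^ 2 + im y ^ 2) > 0)
      by (apply Rdiv_lt_0_compat; lra). lra. }
  assert (Nxiyi : 1 / (re x ^ 2 + im x ^ 2) <> 1 / (re y ^ 2 + im y ^ 2)).
  { intro E. apply HXY.
    assert (T : re y ^ 2 + im y ^ 2 - (re x ^ 2 + im x ^ 2)
              = (re x ^ 2 + im x ^ 2) * (re y ^ 2 + im y ^ 2)
                * (1 / (re x ^ 2 + im x ^ 2) - 1 / (re y ^ 2 + im y ^ 2))) by (field; lra).
    rewrite T, E; ring. }
  assert (Dxxs : x <> xs) by (apply neq_dot; lra).
  assert (Dxys : x <> ys) by (apply neq_dot; lra).
  assert (Dyxs : y <> xs) by (apply neq_dot; lra).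
  assert (Dyys : y <> ys) by (apply neq_dot; lra).
  assert (Dxy : x <> y) by (apply neq_dot; lra).
  assert (Dxsyi : xs <> yi) by (apply neq_dot; lra).
  assert (Dxsxi : xs <> xi) by (apply neq_dot; lra).
  assert (Dysyi : ys <> yi) by (apply neq_dot; lra).
  assert (Dysxi : ys <> xi) by (apply neq_dot; lra).
  assert (Dxiyi : xi <> yi) by (apply neq_dot; rewrite Nxi, Nyi; exact Nxiyi).
  assert (Dxsys : xs <> ys).
  { intro E. unfold arc_order4 in hord. destruct hord as [_ H2].
    rewrite E in H2. assert (Z0 : (ys - ys)%C = 0%C) by (apply C_ext; autorewrite with cre; ring).
    rewrite Z0, Cmod_0 in H2. pose proof (Cmod_ge0 (y - ys)). lra. }
  assert (Hwl : on_line xs ys w) by (apply (collin_a a); assumption).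
  assert (Hwl' : on_line ys xs w) by (apply (collin_a a); assumption).
  assert (Pv : dot v (w - a) = 0).
  { apply Bf_polar; [exact Hwa|]. apply (polar a w x xs y ys v); auto. }
  assert (Ps : dot s (w - a) = 0).
  { apply Bf_polar; [exact Hwa|]. apply (polar a w x ys y xs s); auto. }
  assert (Pt : dot t (w - a) = 0).
  { apply Bf_polar; [exact Hwa|]. apply (polar a w xs yi ys xi t); auto.
    apply online_swap; exact hw2. }
  assert (Pk : dot k (w - a) = 0).
  { apply Bf_polar; [exact Hwa|]. apply (polar a w xs xi ys yi k); auto. }
  assert (Pu : dot u (w - a) = 0).
  { unfold dot in *; rewrite re_sub, im_sub; lra. }
  assert (Part2 : on_line 0%C z v /\ on_line 0%C z s /\ on_line 0%C z t /\ on_line 0%C z k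
   /\ on_line 0%C z u /\ on_line xs ys u /\ u = uf).
  { split; [apply (online0 _ _ _ Hzn Pv Hn)|].
    split; [apply (online0 _ _ _ Hzn Ps Hn)|].
    split; [apply (online0 _ _ _ Hzn Pt Hn)|].
    split; [apply (online0 _ _ _ Hzn Pk Hn)|].
    split; [apply (online0 _ _ _ Hzn Pu Hn)|].
    split; [apply (collin_a a); assumption|exact Hueq]. }
  assert (Hrwf : rw = Cmod (x - y)%C * sqrt ((1 - Cmod x ^ 2) * (1 - Cmod y ^ 2))
             / Rabs (Cmod y ^ 2 - Cmod x ^ 2)).
  { assert (HQ : Rabs (Cmod y ^ 2 - Cmod x ^ 2) <> 0) by (apply Rabs_no_R0; exact HwfD).
    apply sq_eq; [lra| |].
    - apply Rmult_le_pos; [apply Rmult_le_pos; [apply Cmod_ge0|apply sqrt_pos]|].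
      left; apply Rinv_0_lt_compat. apply Rabs_pos_lt; exact HwfD.
    - replace ((Cmod (x - y)%C * sqrt ((1 - Cmod x ^ 2) * (1 - Cmod y ^ 2))
             / Rabs (Cmod y ^ 2 - Cmod x ^ 2)) ^ 2) with
        (Cmod (x - y)%C ^ 2 * sqrt ((1 - Cmod x ^ 2) * (1 - Cmod y ^ 2)) ^ 2
             / Rabs (Cmod y ^ 2 - Cmod x ^ 2) ^ 2) by (field; exact HQ).
      rewrite pow2_sqrt by (rewrite HX, HY; nra).
      rewrite <- (Rsqr_pow2 (Rabs _)), <- Rsqr_abs, Rsqr_pow2.
      rewrite Hrw2. autorewrite with cre. unfold dot. rewrite Hw1, Hw2. field. lra. }
  (* Apollonius *)
  assert (Hap : ((re x - re z) ^ 2 + (im x - im z) ^ 2) * (1 - (re y ^ 2 + im y ^ 2))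
               = ((re z - re y) ^ 2 + (im z - im y) ^ 2) * (1 - (re x ^ 2 + im x ^ 2))).
  { assert (T : (re y ^ 2 + im y ^ 2 - (re x ^ 2 + im x ^ 2)) * (dot z z - 2 * dot z w + 1)
       = - (((re x - re z) ^ 2 + (im x - im z) ^ 2) * (1 - (re y ^ 2 + im y ^ 2))
          - ((re z - re y) ^ 2 + (im z - im y) ^ 2) * (1 - (re x ^ 2 + im x ^ 2))))
      by (unfold dot; rewrite Hw1, Hw2; field; lra).
    rewrite Hzw2, Rmult_0_r in T. lra. }
  assert (HZ1 : re z ^ 2 + im z ^ 2 < 1) by (apply mod_lt1; exact hz1).
  assert (Hhd : hdist x z = hdist z y).
  { unfold hdist. f_equal. f_equal. rewrite !Cmod_sq.
    assert (sX : 0 < sqrt (1 - (re x ^ 2 + im x ^ 2))) by (apply sqrt_lt_R0; lra).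
    assert (sY : 0 < sqrt (1 - (re y ^ 2 + im y ^ 2))) by (apply sqrt_lt_R0; lra).
    assert (sZ : 0 < sqrt (1 - (re z ^ 2 + im z ^ 2))) by (apply sqrt_lt_R0; lra).
    assert (E : Cmod (x - z) * sqrt (1 - (re y ^ 2 + im y ^ 2))
              = Cmod (z - y) * sqrt (1 - (re x ^ 2 + im x ^ 2))).
    { apply sq_eq.
      - apply Rmult_le_pos; [apply Cmod_ge0|lra].
      - apply Rmult_le_pos; [apply Cmod_ge0|lra].
      - rewrite !Rpow_mult_distr, !pow2_sqrt by lra. autorewrite with cre. exact Hap. }
    replace (Cmod (x - z) / (sqrt (1 - (re x ^ 2 + im x ^ 2)) * sqrt (1 - (re z ^ 2 + im z ^ 2))))
      with (Cmod (x - z) * sqrt (1 - (re y ^ 2 + im y ^ 2)) /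
            (sqrt (1 - (re x ^ 2 + im x ^ 2)) * sqrt (1 - (re y ^ 2 + im y ^ 2)) * sqrt (1 - (re z ^ 2 + im z ^ 2))))
      by (field; lra).
    rewrite E. field; lra. }
  assert (Hu0 : ~ (@eq C (RtoC 0) u)).
  { intro E. rewrite <- E in Hua. unfold dot in Hua. rewrite re0, im0 in Hua. lra. }
  pose proof (online0 u z (w - a)%C Pu Hzn Hn) as Hl.
  destruct (param _ _ _ Hu0 Hl) as [la [Z1 Z2]]. rewrite re0 in Z1; rewrite im0 in Z2.
  assert (Id1 : dot u u * (1 - (re x ^ 2 + im x ^ 2) * (re y ^ 2 + im y ^ 2)) ^ 2
     = (re y ^ 2 + im y ^ 2) * (1 - (re x ^ 2 + im x ^ 2)) ^ 2
       + 2 * (re x * re y + im x * im y) * (1 - (re x ^ 2 + im x ^ 2)) * (1 - (re y ^ 2 + im y ^ 2))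
       + (re x ^ 2 + im x ^ 2) * (1 - (re y ^ 2 + im y ^ 2)) ^ 2)
    by (unfold dot; rewrite Hu1, Hu2; field; lra).
  assert (Id2 : (2 - dot u x - dot u y) * (1 - (re x ^ 2 + im x ^ 2) * (re y ^ 2 + im y ^ 2))
     = (1 - (re x * re y + im x * im y)) * ((1 - (re x ^ 2 + im x ^ 2) * (re y ^ 2 + im y ^ 2))
        + (1 - (re x ^ 2 + im x ^ 2)) * (1 - (re y ^ 2 + im y ^ 2))))
    by (unfold dot; rewrite Hu1, Hu2; field; lra).
  assert (Hq : la ^ 2 * dot u u - 2 * la + 1 = 0).
  { assert (T : Cf a z = la ^ 2 * dot u u - 2 * la * dot u a + 1)
      by (unfold Cf, dot; rewrite Z1, Z2; ring).
    rewrite HCz, Hua in T. lra. }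
  assert (Hzl : la ^ 2 * dot u u < 1).
  { replace (la ^ 2 * dot u u) with (re z ^ 2 + im z ^ 2) by (unfold dot; rewrite Z1, Z2; ring).
    exact HZ1. }
  assert (HGle : (re y ^ 2 + im y ^ 2) * (1 - (re x ^ 2 + im x ^ 2)) ^ 2
       + 2 * (re x * re y + im x * im y) * (1 - (re x ^ 2 + im x ^ 2)) * (1 - (re y ^ 2 + im y ^ 2))
       + (re x ^ 2 + im x ^ 2) * (1 - (re y ^ 2 + im y ^ 2)) ^ 2
       <= (1 - (re x ^ 2 + im x ^ 2) * (re y ^ 2 + im y ^ 2)) ^ 2
          - ((1 - (re x ^ 2 + im x ^ 2)) * (1 - (re y ^ 2 + im y ^ 2))) ^ 2).
  { assert (T : (1 - (re x ^ 2 + im x ^ 2) * (re y ^ 2 + im y ^ 2)) ^ 2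
          - ((1 - (re x ^ 2 + im x ^ 2)) * (1 - (re y ^ 2 + im y ^ 2))) ^ 2
          - ((re y ^ 2 + im y ^ 2) * (1 - (re x ^ 2 + im x ^ 2)) ^ 2
       + 2 * (re x * re y + im x * im y) * (1 - (re x ^ 2 + im x ^ 2)) * (1 - (re y ^ 2 + im y ^ 2))
       + (re x ^ 2 + im x ^ 2) * (1 - (re y ^ 2 + im y ^ 2)) ^ 2)
       = ((1 - (re x ^ 2 + im x ^ 2)) * (1 - (re y ^ 2 + im y ^ 2)))
         * ((re x - re y) ^ 2 + (im x - im y) ^ 2)) by ring.
    assert (0 <= ((1 - (re x ^ 2 + im x ^ 2)) * (1 - (re y ^ 2 + im y ^ 2)))
         * ((re x - re y) ^ 2 + (im x - im y) ^ 2)).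
    { apply Rmult_le_pos; [apply Rmult_le_pos; lra|].
      pose proof (pow2_ge_0 (re x - re y)); pose proof (pow2_ge_0 (im x - im y)); lra. }
    lra. }
  assert (HUu : 0 <= dot u u) by (unfold dot; pose proof (pow2_ge_0 (re u)); pose proof (pow2_ge_0 (im u)); simpl in *; lra).
  assert (HDp : 1 - (re x ^ 2 + im x ^ 2) * (re y ^ 2 + im y ^ 2) > 0) by lra.
  assert (HAB : (1 - (re x ^ 2 + im x ^ 2)) * (1 - (re y ^ 2 + im y ^ 2)) > 0)
    by (apply Rmult_lt_0_compat; lra).
  assert (HG0 : 0 <= (re y ^ 2 + im y ^ 2) * (1 - (re x ^ 2 + im x ^ 2)) ^ 2
       + 2 * (re x * re y + im x * im y) * (1 - (re x ^ 2 + im x ^ 2)) * (1 - (re y ^ 2 + im y ^ 2))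
       + (re x ^ 2 + im x ^ 2) * (1 - (re y ^ 2 + im y ^ 2)) ^ 2).
  { rewrite <- Id1. apply Rmult_le_pos; [exact HUu|apply pow2_ge_0]. }
  pose proof (lam_bound _ _ _ _ _ HDp HAB HG0 Id1 HGle Hq Hzl) as Hlb.
  pose proof (p_lt1 _ _ _ _ HX1 HY1) as Hp1.
  pose proof (lk _ _ _ _ _ HDp Hp1 Id2 Hlb) as HlK.
  assert (Hin : (re x - re z) * (re y - re z) + (im x - im z) * (im y - im z) <= 0).
  { assert (T : (re x - re z) * (re y - re z) + (im x - im z) * (im y - im z)
       = (re x * re y + im x * im y) - la * (dot u x + dot u y) + la ^ 2 * dot u u)
      by (unfold dot; rewrite Z1, Z2; ring).
    rewrite T. lra. }
  assert (Hch : forall q1 q2 q3 q4 r1 r2 : R, (q1 - r1) * (q3 - r1) + (q2 - r2) * (q4 - r2) <= 0 ->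
            (r1 - q1) ^ 2 + (r2 - q2) ^ 2 <= (q3 - q1) ^ 2 + (q4 - q2) ^ 2 /\
            (r1 - q3) ^ 2 + (r2 - q4) ^ 2 <= (q3 - q1) ^ 2 + (q4 - q2) ^ 2).
  { intros q1 q2 q3 q4 r1 r2 H.
    assert (T : (q3 - q1) ^ 2 + (q4 - q2) ^ 2 = (r1 - q1) ^ 2 + (r2 - q2) ^ 2
               + ((r1 - q3) ^ 2 + (r2 - q4) ^ 2) - 2 * ((q1 - r1) * (q3 - r1) + (q2 - r2) * (q4 - r2)))
      by ring.
    pose proof (pow2_ge_0 (r1 - q1)); pose proof (pow2_ge_0 (r2 - q2));
    pose proof (pow2_ge_0 (r1 - q3)); pose proof (pow2_ge_0 (r2 - q4)). lra. }
  destruct (Hch _ _ _ _ _ _ Hin) as [Ch1 Ch2].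
  assert (C1 : Cmod (z - x) <= Cmod (y - x)).
  { apply sq_le; try apply Cmod_ge0. autorewrite with cre. exact Ch1. }
  assert (C2 : Cmod (z - y) <= Cmod (y - x)).
  { apply sq_le; try apply Cmod_ge0. autorewrite with cre. exact Ch2. }
  split; [|exact Part2].
  split; [exact Horth|].
  split; [|split; [exact Hweq|exact Hrwf]].
  unfold hyp_midpoint, on_J. split; [|exact Hhd].
  split; [exact hza|]. split; [exact hz1|]. split; assumption.
Qed.
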